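(* Let $\mathcal T=(G,\mathbf T^{(1)},\dots,\mathbf T^{(n)})$ be a tensor network with contraction $\mathbf T\neq 0$. Then its absolute condition number is $\kappa_a(\mathcal T)=\max_{1\le i\le n}\|M_{\mathbf T^{(i)}}\|_2$ and its relative condition number is $\kappa_r(\mathcal T)=\frac{\sum_{i=1}^n\|\mathbf T^{(i)}\|_F}{\|\mathbf T\|_F}\max_{1\le i\le n}\|M_{\mathbf T^{(i)}}\|_2$.
   Context: Tensor network setup: A tensor network $\mathcal T=(G,\mathbf T^{(1)},\dots,\mathbf T^{(n)})$ consists of a multigraph $G$ with vertices $v_1,\dots,v_n$, whose edges are either edges between distinct vertices (contracted legs) or self-loops (uncontracted legs), each edge having a dimension, and tensors $\mathbf T^{(j)}$ at $v_j$ with one mode per incident edge. Its contraction $\mathbf T=\mathscr T_G(\mathbf T^{(1)},\dots,\mathbf T^{(n)})$ is obtained by summing over all contracted-edge indices the product of the entries of all $\mathbf T^{(j)}$; it is a tensor indexed by the uncontracted legs and is multilinear in the $\mathbf T^{(j)}$. The environment matrix $M_{\mathbf T^{(j)}}$ of site $j$ is the matrix of the linear map $X\mapsto\mathrm{vec}(\mathscr T_G(\mathbf T^{(1)},\dots,\mathbf T^{(j-1)},X,\mathbf T^{(j+1)},\dots,\mathbf T^{(n)}))$ acting on $\mathrm{vec}(X)$; thus $\mathrm{vec}(\mathbf T)=M_{\mathbf T^{(j)}}\mathrm{vec}(\mathbf T^{(j)})$. A sitewise perturbation is a tuple $\delta=(\delta^{(i)})_{i=1}^n$ of tensors with $\delta^{(i)}$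 of the same shape as $\mathbf T^{(i)}$; the perturbed tensor is $\hat{\mathbf T}=\mathscr T_G(\mathbf T^{(1)}+\delta^{(1)},\dots,\mathbf T^{(n)}+\delta^{(n)})$, the absolute error is $\mathscr E_a(\mathcal T,\delta)=\|\hat{\mathbf T}-\mathbf T\|_F$ and the relative error is $\mathscr E_r(\mathcal T,\delta)=\|\hat{\mathbf T}-\mathbf T\|_F/\|\mathbf T\|_F$. Here $\|\cdot\|_F$ is the Frobenius norm and $\|\cdot\|_2$ the spectral norm. Condition numbers: with $S_\epsilon=\{\delta:\sum_i\|\delta^{(i)}\|_F\le\epsilon\}$, $\kappa_a(\mathcal T)=\lim_{\epsilon\to0^+}\sup_{\delta\in S_\epsilon}\mathscr E_a(\mathcal T,\delta)/\epsilon$ and $\kappa_r(\mathcal T)=\frac{\sum_i\|\mathbf T^{(i)}\|_F}{\|\mathbf T\|_F}\kappa_a(\mathcal T)$. *)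

(* Defs.v *)
From Stdlib Require Import Reals List Arith ClassicalEpsilon.
Import ListNotations.
Open Scope R_scope.

Definition lsum {A} (l : list A) (f : A -> R) : R :=
  fold_right (fun x acc => f x + acc) 0 l.
Definition lprod {A} (l : list A) (f : A -> R) : R :=
  fold_right (fun x acc => f x * acc) 1 l.

Fixpoint all_idx (ds : list nat) : list (list nat) :=
  match ds with
  | [] => [[]]
  | d :: ds' => flat_map (fun i => map (cons i) (all_idx ds')) (seq 0 d)
  end.

(* An edge (u, v, d) joins vertices u and v and has dimension d;
   u <> v : contracted leg, u = v : uncontracted leg (self-loop). *)
Definition edge := (nat * nat * nat)%type.
Record TN := mkTN { nsites : nat; edges : list edge }.

Definition e_src (e : edge) : nat := fst (fst e).
Definition e_dst (e : edge) : nat := snd (fst e).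
Definition e_dim (e : edge) : nat := snd e.

Definition well_formed (G : TN) : Prop :=
  Forall (fun e => (e_src e < nsites G)%nat /\ (e_dst e < nsites G)%nat) (edges G).

Definition edge_at (G : TN) (k : nat) : edge := nth k (edges G) (0%nat, 0%nat, 0%nat).

(* positions (in the edge list) of the edges incident to vertex j,
   in edge-list order: these are the modes of the tensor at j *)
Definition incident (G : TN) (j : nat) : list nat :=
  filter (fun k => orb (Nat.eqb (e_src (edge_at G k)) j) (Nat.eqb (e_dst (edge_at G k)) j))
         (seq 0 (length (edges G))).

Definition open_legs (G : TN) : list nat :=
  filter (fun k => Nat.eqb (e_src (edge_at G k)) (e_dst (edge_at G k)))
         (seq 0 (length (edges G))).

Definition shape (G : TN) (j : nat) : list nat :=
  map (fun k => e_dim (edge_at G k)) (incident G j).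
Definition out_shape (G : TN) : list nat :=
  map (fun k => e_dim (edge_at G k)) (open_legs G).

(* a tensor is a function on multi-indices; only entries at indices of
   the relevant shape matter *)
Definition tensor := list nat -> R.

Definition restrict (pos : list nat) (a : list nat) : list nat :=
  map (fun k => nth k a 0%nat) pos.

Definition contract (G : TN) (Ts : nat -> tensor) : tensor :=
  fun b =>
    lsum (all_idx (map e_dim (edges G))) (fun a =>
      if list_eq_dec Nat.eq_dec (restrict (open_legs G) a) b
      then lprod (seq 0 (nsites G)) (fun j => Ts j (restrict (incident G j) a))
      else 0).

Definition frob (s : list nat) (X : tensor) : R :=
  sqrt (lsum (all_idx s) (fun i => X i ^ 2)).

Definition subst_site (Ts : nat -> tensor) (j : nat) (X : tensor) : nat -> tensor :=
  fun i => if Nat.eqb i j then X else Ts i.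

Definition unit_tensor (c : list nat) : tensor :=
  fun i => if list_eq_dec Nat.eq_dec i c then 1 else 0.

(* Environment matrix of site j: rows indexed by the output multi-indices,
   columns by the multi-indices of T^(j); column c is the contraction with
   the unit tensor e_c at site j, i.e. the matrix of X |-> contraction. *)
Definition env_matrix (G : TN) (Ts : nat -> tensor) (j : nat)
  : list nat -> list nat -> R :=
  fun b c => contract G (subst_site Ts j (unit_tensor c)) b.

Definition Rsup (E : R -> Prop) : R := epsilon (inhabits 0) (is_lub E).

Definition spec_norm (rows cols : list (list nat)) (A : list nat -> list nat -> R) : R :=
  Rsup (fun r => exists x : list nat -> R,
          sqrt (lsum cols (fun c => x c ^ 2)) <= 1 /\
          r = sqrt (lsum rows (fun b => (lsum cols (fun c => A b c * x c)) ^ 2))).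

Definition env_norm (G : TN) (Ts : nat -> tensor) (j : nat) : R :=
  spec_norm (all_idx (out_shape G)) (all_idx (shape G j)) (env_matrix G Ts j).

Definition max_env_norm (G : TN) (Ts : nat -> tensor) : R :=
  fold_right Rmax 0 (map (env_norm G Ts) (seq 0 (nsites G))).

Definition abs_err (G : TN) (Ts delta : nat -> tensor) : R :=
  frob (out_shape G)
       (fun b => contract G (fun i x => Ts i x + delta i x) b - contract G Ts b).

Definition sum_site_norms (G : TN) (Ts : nat -> tensor) : R :=
  lsum (seq 0 (nsites G)) (fun i => frob (shape G i) (Ts i)).

Definition sup_ratio (G : TN) (Ts : nat -> tensor) (eps : R) : R :=
  Rsup (fun r => exists delta : nat -> tensor,
          sum_site_norms G delta <= eps /\ r = abs_err G Ts delta / eps).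

Definition is_kappa_a (G : TN) (Ts : nat -> tensor) (k : R) : Prop :=
  limit1_in (sup_ratio G Ts) (fun eps => 0 < eps) k 0.

Definition kappa_a (G : TN) (Ts : nat -> tensor) : R :=
  epsilon (inhabits 0) (is_kappa_a G Ts).

Definition kappa_r (G : TN) (Ts : nat -> tensor) : R :=
  sum_site_norms G Ts / frob (out_shape G) (contract G Ts) * kappa_a G Ts.

(* Main.v *)
Require Import Defs.
From Stdlib Require Import Reals List Arith ClassicalEpsilon.
From Stdlib Require Import Lra Lia Psatz FunctionalExtensionality.
Import ListNotations.
Open Scope R_scope.

Section L.
Context {A : Type}.

Lemma lsum_cons (a : A) l f : lsum (a :: l) f = f a + lsum l f.
Proof. reflexivity. Qed.
Lemma lsum_nil f : lsum (@nil A) f = 0.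
Proof. reflexivity. Qed.

Lemma lsum_ext (l : list A) f g : (forall x, In x l -> f x = g x) -> lsum l f = lsum l g.
Proof. induction l; simpl; intros H; auto. rewrite H, IHl; auto. Qed.

Lemma lprod_ext (l : list A) f g : (forall x, In x l -> f x = g x) -> lprod l f = lprod l g.
Proof. induction l; simpl; intros H; auto. rewrite H, IHl; auto. Qed.

Lemma lsum_plus (l : list A) f g : lsum l (fun x => f x + g x) = lsum l f + lsum l g.
Proof. induction l; simpl; auto. lra. rewrite IHl; lra. Qed.

Lemma lsum_minus (l : list A) f g : lsum l (fun x => f x - g x) = lsum l f - lsum l g.
Proof. induction l; simpl; auto. lra. rewrite IHl; lra. Qed.

Lemma lsum_scal (l : list A) c f : lsum l (fun x => c * f x) = c * lsum l f.
Proof. induction l; simpl; auto. lra. rewrite IHl; lra. Qed.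

Lemma lsum_zero (l : list A) : lsum l (fun _ => 0) = 0.
Proof. induction l; simpl; auto. rewrite IHl; lra. Qed.

Lemma lsum_app (l1 l2 : list A) f : lsum (l1 ++ l2) f = lsum l1 f + lsum l2 f.
Proof. induction l1; simpl; auto. lra. rewrite IHl1; lra. Qed.

Lemma lsum_le (l : list A) f g : (forall x, In x l -> f x <= g x) -> lsum l f <= lsum l g.
Proof. induction l; simpl; intros H. lra. pose proof (H a (or_introl eq_refl)). pose proof (IHl (fun x h => H x (or_intror h))). lra. Qed.

Lemma lsum_nonneg (l : list A) f : (forall x, In x l -> 0 <= f x) -> 0 <= lsum l f.
Proof. intros H. rewrite <- (lsum_zero l). apply lsum_le; auto. Qed.

Lemma lsum_abs (l : list A) f : Rabs (lsum l f) <= lsum l (fun x => Rabs (f x)).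
Proof. induction l; simpl. rewrite Rabs_R0; lra. eapply Rle_trans. apply Rabs_triang. lra. Qed.

Lemma lsum_term (l : list A) f x : (forall y, In y l -> 0 <= f y) -> In x l -> f x <= lsum l f.
Proof. induction l; simpl; intros H Hx. destruct Hx.
  destruct Hx as [<-|Hx].
  - pose proof (lsum_nonneg l f (fun y h => H y (or_intror h))). lra.
  - pose proof (H a (or_introl eq_refl)). pose proof (IHl (fun y h => H y (or_intror h)) Hx). lra. Qed.

Lemma lsum_bound (l : list A) f K : (forall x, In x l -> Rabs (f x) <= K) ->
  Rabs (lsum l f) <= INR (length l) * K.
Proof. intros H. eapply Rle_trans. apply lsum_abs. clear -H. induction l as [|a l IHl]. simpl; lra.
  change (length (a::l)) with (S (length l)). rewrite S_INR. simpl lsum.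
  pose proof (H a (or_introl eq_refl)). pose proof (IHl (fun y h => H y (or_intror h))). unfold lsum in *; simpl. lra. Qed.

Lemma lsum_single (l : list A) f y : NoDup l -> In y l -> (forall x, In x l -> x <> y -> f x = 0) ->
  lsum l f = f y.
Proof. induction l; simpl; intros Hn Hy H. destruct Hy. inversion Hn; subst.
  destruct Hy as [<-|Hy].
  - rewrite (lsum_ext l f (fun _ => 0)), lsum_zero. lra. intros x Hx. apply H; auto. intros ->; tauto.
  - rewrite H, IHl; auto. lra. intros ->; tauto. Qed.

Definition nrm (l : list A) (f : A -> R) : R := sqrt (lsum l (fun x => f x ^ 2)).

Lemma nrm_nonneg (l : list A) f : 0 <= nrm l f.
Proof. apply sqrt_pos. Qed.

Lemma nrm_ext (l : list A) f g : (forall x, In x l -> f x = g x) -> nrm l f = nrm l g.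
Proof. intros H; unfold nrm; f_equal; apply lsum_ext; intros; rewrite H; auto. Qed.

Lemma sq_nonneg_sum (l : list A) f : 0 <= lsum l (fun x => f x ^ 2).
Proof. apply lsum_nonneg; intros; nra. Qed.

Lemma nrm_scale (l : list A) k f : nrm l (fun x => k * f x) = Rabs k * nrm l f.
Proof. unfold nrm. rewrite (lsum_ext l _ (fun x => k^2 * f x ^2)) by (intros; ring).
  rewrite lsum_scal, sqrt_mult_alt by nra. f_equal. rewrite <- sqrt_Rsqr_abs. unfold Rsqr. f_equal; ring. Qed.

Lemma entry_le_nrm (l : list A) f x : In x l -> Rabs (f x) <= nrm l f.
Proof. intros Hx. unfold nrm. rewrite <- sqrt_Rsqr_abs. apply sqrt_le_1_alt.
  unfold Rsqr. replace (f x * f x) with (f x ^ 2) by ring.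
  apply (lsum_term l (fun y => f y ^ 2) x); auto. intros; nra. Qed.

Lemma nrm_zero_entries (l : list A) f : nrm l f = 0 -> forall x, In x l -> f x = 0.
Proof. intros H x Hx. pose proof (entry_le_nrm l f x Hx). rewrite H in H0.
  pose proof (Rabs_pos (f x)). destruct (Rcase_abs (f x)); [rewrite Rabs_left in H0 by lra|rewrite Rabs_right in H0 by lra]; lra. Qed.

Lemma CS (l : list A) f g : (lsum l (fun x => f x * g x))^2 <= lsum l (fun x => f x ^2) * lsum l (fun x => g x ^2).
Proof. induction l. rewrite !lsum_nil; lra. rewrite !lsum_cons.
  set (C := lsum l (fun x => f x * g x)) in *. set (P := lsum l (fun x => f x ^2)) in *.
  set (Q := lsum l (fun x => g x ^2)) in *.
  assert (0 <= P) by apply sq_nonneg_sum. assert (0 <= Q) by apply sq_nonneg_sum.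
  set (x := f a) in *. set (y := g a). clearbody C P Q x y.
  assert (2 * x * y * C <= x^2 * Q + y^2 * P).
  { destruct (Req_dec P 0) as [HP|HP].
    - assert (C = 0) by (rewrite HP in IHl; nra). rewrite H1, HP. nra.
    - assert (P * (x^2*Q + y^2*P - 2*x*y*C) >= 0).
      { assert (Hr : P*(x^2*Q + y^2*P - 2*x*y*C) = x^2*(P*Q - C^2) + (x*C - y*P)^2) by ring. rewrite Hr.
        apply Rle_ge. apply Rplus_le_le_0_compat. apply Rmult_le_pos. apply pow2_ge_0. clear -IHl. lra. apply pow2_ge_0. }
      assert (0 < P) by lra. nra. }
  nra. Qed.

Lemma minkowski (l : list A) f g : nrm l (fun x => f x + g x) <= nrm l f + nrm l g.
Proof. unfold nrm.
  pose proof (sq_nonneg_sum l f). pose proof (sq_nonneg_sum l g). pose proof (sq_nonneg_sum l (fun x => f x + g x)).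
  apply Rsqr_incr_0_var.
  2: { pose proof (sqrt_pos (lsum l (fun x => f x ^2))). pose proof (sqrt_pos (lsum l (fun x => g x ^2))). lra. }
  rewrite Rsqr_sqrt by auto.
  rewrite (lsum_ext l _ (fun x => f x ^2 + (2 * (f x * g x) + g x ^2))) by (intros; ring).
  rewrite !lsum_plus, lsum_scal.
  pose proof (CS l f g).
  assert (lsum l (fun x => f x * g x) <= sqrt (lsum l (fun x => f x ^2)) * sqrt (lsum l (fun x => g x ^2))).
  { rewrite <- sqrt_mult_alt by auto. destruct (Rle_dec (lsum l (fun x => f x * g x)) 0).
    pose proof (sqrt_pos (lsum l (fun x : A => f x ^ 2) * lsum l (fun x : A => g x ^ 2))). lra.
    rewrite <- (sqrt_pow2 (lsum l (fun x => f x * g x))) by lra. apply sqrt_le_1_alt. auto. }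
  unfold Rsqr. pose proof (Rsqr_sqrt _ H). pose proof (Rsqr_sqrt _ H0). unfold Rsqr in *. nra. Qed.

Lemma nrm_le_l1 (l : list A) f : nrm l f <= lsum l (fun x => Rabs (f x)).
Proof. unfold nrm. assert (Hs : lsum l (fun x => f x ^2) <= (lsum l (fun x => Rabs (f x)))^2 /\ 0 <= lsum l (fun x => Rabs (f x))).
  { induction l. rewrite !lsum_nil; simpl; lra. rewrite !lsum_cons. destruct IHl. split. 2: pose proof (Rabs_pos (f a)); lra.
    pose proof (Rabs_pos (f a)). assert (f a ^2 = Rabs (f a) ^2) by (destruct (Rcase_abs (f a)); [rewrite Rabs_left by lra|rewrite Rabs_right by lra]; nra). nra. }
  destruct Hs. rewrite <- (sqrt_pow2 (lsum l (fun x => Rabs (f x)))) by auto. apply sqrt_le_1_alt; auto. Qed.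

End L.

Lemma nrm_lsum {A B} (L : list A) (I : list B) v :
  nrm L (fun b => lsum I (fun i => v i b)) <= lsum I (fun i => nrm L (v i)).
Proof. induction I; simpl.
  - unfold nrm. rewrite (lsum_ext L _ (fun _ => 0)), lsum_zero, sqrt_0. lra. intros; simpl; ring.
  - eapply Rle_trans. apply (minkowski L (v a) (fun b => lsum I (fun i => v i b))). lra. Qed.

Lemma lsum_swap {A B} (l1 : list A) (l2 : list B) f :
  lsum l1 (fun x => lsum l2 (fun y => f x y)) = lsum l2 (fun y => lsum l1 (fun x => f x y)).
Proof. induction l1; simpl. rewrite lsum_zero; auto. rewrite IHl1, <- lsum_plus. auto. Qed.

Lemma In_all_idx ds a : In a (all_idx ds) <->
  length a = length ds /\ forall k, (k < length ds)%nat -> (nth k a 0 < nth k ds 0)%nat.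
Proof.
  revert a; induction ds as [|d ds IH]; intros a; simpl.
  - split. intros [<-|[]]. split; auto; intros; lia.
    intros [H _]. destruct a; simpl in H; try lia. auto.
  - rewrite in_flat_map. split.
    + intros [i [Hi Ha]]. apply in_seq in Hi. apply in_map_iff in Ha as [a' [<- Ha']].
      apply IH in Ha' as [H1 H2]. simpl. split. lia. intros [|k] Hk; simpl. lia. apply H2. lia.
    + intros [H1 H2]. destruct a as [|i a']; simpl in H1. lia.
      exists i. split. apply in_seq. pose proof (H2 0%nat ltac:(lia)). simpl in H. lia.
      apply in_map. apply IH. split. lia. intros k Hk. apply (H2 (S k)). lia.
Qed.

Lemma NoDup_all_idx ds : NoDup (all_idx ds).
Proof.
  induction ds as [|d ds IH]; simpl. constructor. simpl; tauto. constructor.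
  generalize 0%nat. induction d; intros s; simpl. constructor.
  apply NoDup_app. apply NoDup_map_NoDup_ForallPairs; auto. intros x y _ _ H; inversion H; auto.
  apply IHd.
  intros x Hx Hx2. apply in_map_iff in Hx as [x' [<- _]]. apply in_flat_map in Hx2 as [i [Hi Hx2]].
  apply in_seq in Hi. apply in_map_iff in Hx2 as [y [Hy _]]. inversion Hy. lia.
Qed.

Lemma incident_lt G j k : In k (incident G j) -> (k < length (edges G))%nat.
Proof. unfold incident. intros H. apply filter_In in H as [H _]. apply in_seq in H. lia. Qed.

Lemma nth_map' {X Y} (f : X -> Y) l d d0 k : (k < length l)%nat -> nth k (map f l) d = f (nth k l d0).
Proof. intros H. rewrite (nth_indep _ d (f d0)) by (rewrite length_map; auto). apply map_nth. Qed.

Lemma restrict_in G j a : In a (all_idx (map e_dim (edges G))) ->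
  In (restrict (incident G j) a) (all_idx (shape G j)).
Proof.
  intros Ha. apply In_all_idx in Ha as [H1 H2]. apply In_all_idx. unfold restrict, shape.
  rewrite !length_map. split; auto. intros k Hk. rewrite ?length_map in Hk.
  rewrite (nth_map' _ _ _ 0%nat) by auto. rewrite (nth_map' _ _ _ 0%nat) by auto.
  assert (Hk' : (nth k (incident G j) 0%nat < length (edges G))%nat) by (apply (incident_lt G j); apply nth_In; auto).
  rewrite length_map in H2. specialize (H2 _ Hk').
  rewrite (nth_map' _ _ _ (0%nat,0%nat,0%nat)) in H2 by auto. unfold edge_at. apply H2.
Qed.

Lemma lprod_subst (l : list nat) i v f : NoDup l -> In i l ->
  lprod l (fun j => if Nat.eqb j i then v else f j) = v * lprod l (fun j => if Nat.eqb j i then 1 else f j).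
Proof.
  induction l as [|x l IH]; intros Hn Hi. destruct Hi. inversion Hn; subst. simpl.
  destruct Hi as [->|Hi].
  - rewrite Nat.eqb_refl. rewrite (lprod_ext l _ (fun j => if Nat.eqb j i then 1 else f j)). ring.
    intros y Hy. destruct (Nat.eqb_spec y i); subst; tauto.
  - destruct (Nat.eqb_spec x i). subst; tauto. rewrite IH by auto. ring.
Qed.

Definition AE (G : TN) := all_idx (map e_dim (edges G)).
Definition piece (G : TN) (F : nat -> tensor) (a : list nat) : R :=
  lprod (seq 0 (nsites G)) (fun j => F j (restrict (incident G j) a)).

Lemma contract_eq G F b : contract G F b =
  lsum (AE G) (fun a => if list_eq_dec Nat.eq_dec (restrict (open_legs G) a) b then piece G F a else 0).
Proof. reflexivity. Qed.

Definition pprime G Ts i a :=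
  lprod (seq 0 (nsites G)) (fun j => if Nat.eqb j i then 1 else Ts j (restrict (incident G j) a)).

Lemma piece_subst G Ts i X a : (i < nsites G)%nat ->
  piece G (subst_site Ts i X) a = X (restrict (incident G i) a) * pprime G Ts i a.
Proof.
  intros Hi. unfold piece, pprime. rewrite <- lprod_subst.
  apply lprod_ext. intros j _. unfold subst_site. destruct (Nat.eqb_spec j i); subst; auto.
  apply seq_NoDup. apply in_seq; lia.
Qed.

Lemma linearity G Ts i X b : (i < nsites G)%nat ->
  contract G (subst_site Ts i X) b =
  lsum (all_idx (shape G i)) (fun c => env_matrix G Ts i b c * X c).
Proof.
  intros Hi. unfold env_matrix. symmetry.
  rewrite (lsum_ext _ _ (fun c => lsum (AE G) (fun a =>
     (if list_eq_dec Nat.eq_dec (restrict (open_legs G) a) b then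
        unit_tensor c (restrict (incident G i) a) * pprime G Ts i a else 0) * X c))).
  2:{ intros c _. rewrite contract_eq. rewrite Rmult_comm, <- lsum_scal. apply lsum_ext.
      intros a _. rewrite piece_subst by auto. ring. }
  rewrite lsum_swap. rewrite contract_eq. apply lsum_ext. intros a Ha.
  destruct (list_eq_dec Nat.eq_dec (restrict (open_legs G) a) b).
  2:{ rewrite (lsum_ext _ _ (fun _ => 0)). rewrite lsum_zero; auto. intros; ring. }
  rewrite piece_subst by auto.
  rewrite (lsum_single _ _ (restrict (incident G i) a)).
  - unfold unit_tensor. destruct (list_eq_dec Nat.eq_dec _ _); [ring|tauto].
  - apply NoDup_all_idx.
  - apply restrict_in; auto.
  - intros c _ Hc. unfold unit_tensor. destruct (list_eq_dec Nat.eq_dec _ _). subst; tauto. ring.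
Qed.

Lemma lprod_bound (l : list nat) f B : 0 <= B -> (forall j, In j l -> Rabs (f j) <= B) ->
  Rabs (lprod l f) <= B ^ length l.
Proof.
  intros HB; induction l as [|x l IH]; intros H; simpl. rewrite Rabs_R1; lra.
  rewrite Rabs_mult. apply Rmult_le_compat; auto using Rabs_pos. apply H; simpl; auto. apply IH; intros; apply H; simpl; auto.
Qed.

Lemma rem_bounds (l : list nat) t d K e : NoDup l ->
  (forall j, In j l -> Rabs (t j) <= K) -> (forall j, In j l -> Rabs (d j) <= e) ->
  0 <= K -> 0 <= e <= 1 ->
  Rabs (lprod l (fun j => t j + d j) - lprod l t) <= e * INR (length l) * (K+1) ^ length l /\
  Rabs (lprod l (fun j => t j + d j) - lprod l t -
        lsum l (fun i => lprod l (fun j => if Nat.eqb j i then d j else t j)))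
    <= e^2 * INR (length l) ^ 2 * (K+1) ^ length l.
Proof.
  intros Hn Ht Hd HK He. induction l as [|x l IH].
  { simpl. unfold lsum; simpl. rewrite !Rminus_diag, Rabs_R0. split; nra. }
  inversion Hn; subst.
  destruct IH as [IH1 IH2]; [auto| intros j Hj; apply Ht; simpl; auto | intros j Hj; apply Hd; simpl; auto |].
  assert (HP : Rabs (lprod l (fun j => t j + d j)) <= (K+1) ^ length l).
  { apply lprod_bound. lra. intros j Hj. eapply Rle_trans. apply Rabs_triang.
    pose proof (Ht j (or_intror Hj)). pose proof (Hd j (or_intror Hj)). lra. }
  assert (HS : lsum (x :: l) (fun i => lprod (x::l) (fun j => if Nat.eqb j i then d j else t j))
     = d x * lprod l t + t x * lsum l (fun i => lprod l (fun j => if Nat.eqb j i then d j else t j))).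
  { rewrite lsum_cons. simpl. rewrite Nat.eqb_refl.
    rewrite (lprod_ext l _ t). rewrite <- lsum_scal. f_equal. apply lsum_ext. intros i Hi.
    destruct (Nat.eqb_spec x i). subst; tauto. auto.
    intros j Hj. destruct (Nat.eqb_spec j x). subst; tauto. auto. }
  rewrite HS. simpl lprod. change (length (x::l)) with (S (length l)). rewrite S_INR. change ((K+1)^(S (length l))) with ((K+1) * (K+1)^(length l)).
  set (P := lprod l (fun j => t j + d j)) in *. set (Q := lprod l t) in *.
  set (S := lsum l (fun i => lprod l (fun j => if Nat.eqb j i then d j else t j))) in *.
  set (m := INR (length l)) in *. set (B := (K+1) ^ length l) in *.
  assert (0 <= m) by apply pos_INR. assert (0 <= B) by (apply pow_le; lra).
  pose proof (Ht x (or_introl eq_refl)). pose proof (Hd x (or_introl eq_refl)).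
  clearbody P Q S m B.
  replace ((t x + d x) * P - t x * Q - (d x * Q + t x * S)) with (t x * (P - Q - S) + d x * (P - Q)) by ring.
  replace ((t x + d x) * P - t x * Q) with (t x * (P - Q) + d x * P) by ring.
  assert (HeB : 0 <= e * B) by (apply Rmult_le_pos; lra).
  assert (HemB : 0 <= e * m * B) by (repeat apply Rmult_le_pos; lra).
  assert (He2 : 0 <= e ^ 2 * m ^ 2 * B) by (repeat apply Rmult_le_pos; try apply pow2_ge_0; lra).
  split.
  - eapply Rle_trans. apply Rabs_triang. rewrite !Rabs_mult.
    assert (Rabs (t x) * Rabs (P - Q) <= K * (e * m * B)) by (apply Rmult_le_compat; auto using Rabs_pos).
    assert (Rabs (d x) * Rabs P <= e * B) by (apply Rmult_le_compat; auto using Rabs_pos).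
    assert (K * (e*m*B) <= (K+1) * (e*m*B)) by nra.
    assert (e * B <= (K+1) * (e*B)) by nra.
    assert (Heq : e * (m + 1) * ((K + 1) * B) = (K+1) * (e*m*B) + (K+1) * (e*B)) by ring.
    rewrite Heq. lra.
  - eapply Rle_trans. apply Rabs_triang. rewrite !Rabs_mult.
    assert (Rabs (t x) * Rabs (P - Q - S) <= K * (e^2 * m^2 * B)) by (apply Rmult_le_compat; auto using Rabs_pos).
    assert (Rabs (d x) * Rabs (P - Q) <= e * (e*m*B)) by (apply Rmult_le_compat; auto using Rabs_pos).
    assert (K * (e^2*m^2*B) <= (K+1) * (e^2*m^2*B)) by nra.
    assert (e*(e*m*B) <= (K+1) * (e*(e*m*B))) by (assert (0 <= e*(e*m*B)) by (apply Rmult_le_pos; lra); nra).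
    assert (Hm : (K+1) * (e^2*m^2*B) + (K+1) * (e*(e*m*B)) <= e ^ 2 * (m + 1) ^ 2 * ((K + 1) * B)).
    { assert (e ^ 2 * (m + 1) ^ 2 * ((K + 1) * B) - ((K+1) * (e^2*m^2*B) + (K+1) * (e*(e*m*B)))
              = (K+1) * (e^2 * B) * (m + 1)) by ring.
      assert (0 <= (K+1) * (e^2 * B) * (m + 1)) by (repeat apply Rmult_le_pos; try apply pow2_ge_0; lra). lra. }
    lra.
Qed.

Lemma Rsup_lub (E : R -> Prop) : bound E -> (exists x, E x) -> is_lub E (Rsup E).
Proof.
  intros Hb He. unfold Rsup. apply epsilon_spec. destruct (completeness E Hb He) as [m Hm]. eauto.
Qed.

Definition spec_set (rows cols : list (list nat)) (A : list nat -> list nat -> R) (r : R) :=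
  exists x : list nat -> R, sqrt (lsum cols (fun c => x c ^ 2)) <= 1 /\
    r = sqrt (lsum rows (fun b => (lsum cols (fun c => A b c * x c)) ^ 2)).

Lemma spec_lub rows cols A : is_lub (spec_set rows cols A) (spec_norm rows cols A).
Proof.
  apply Rsup_lub.
  - exists (sqrt (lsum rows (fun b => lsum cols (fun c => A b c ^ 2)))).
    intros r [x [Hx ->]]. apply sqrt_le_1_alt. apply lsum_le. intros b _.
    eapply Rle_trans. apply CS.
    assert (Hx2 : lsum cols (fun c => x c ^ 2) <= 1).
    { rewrite <- (pow2_sqrt (lsum cols (fun c => x c ^ 2))) by apply sq_nonneg_sum.
      pose proof (sqrt_pos (lsum cols (fun c => x c ^ 2))). nra. }
    apply Rle_trans with (lsum cols (fun c => A b c ^ 2) * 1); [|lra].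
    apply Rmult_le_compat_l; auto. apply (sq_nonneg_sum cols (fun c => A b c)).
  - exists (sqrt (lsum rows (fun b => (lsum cols (fun c => A b c * 0)) ^ 2))).
    exists (fun _ => 0). split; auto. rewrite (lsum_ext cols _ (fun _ => 0)) by (intros; simpl; ring).
    rewrite lsum_zero, sqrt_0. lra.
Qed.

Lemma spec_mul rows cols A v :
  nrm rows (fun b => lsum cols (fun c => A b c * v c)) <= spec_norm rows cols A * nrm cols v.
Proof.
  destruct (Req_dec (nrm cols v) 0) as [H0|H0].
  - rewrite H0, Rmult_0_r. unfold nrm. rewrite (lsum_ext rows _ (fun _ => 0)).
    rewrite lsum_zero, sqrt_0; lra.
    intros b _. rewrite (lsum_ext cols _ (fun _ => 0)). rewrite lsum_zero; simpl; ring.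
    intros c Hc. rewrite (nrm_zero_entries cols v H0 c Hc). ring.
  - set (s := nrm cols v) in *. assert (Hs : 0 < s) by (assert (0 <= s) by apply nrm_nonneg; lra).
    set (x := fun c => / s * v c).
    assert (Hx : nrm cols x = 1).
    { unfold x. rewrite nrm_scale. fold s. rewrite Rabs_right. field. lra. left; apply Rinv_0_lt_compat; lra. }
    assert (Hin : spec_set rows cols A (nrm rows (fun b => lsum cols (fun c => A b c * x c)))).
    { exists x. split. unfold nrm in Hx. lra. reflexivity. }
    pose proof (proj1 (spec_lub rows cols A) _ Hin).
    rewrite (nrm_ext rows _ (fun b => s * lsum cols (fun c => A b c * x c))).
    rewrite nrm_scale, Rabs_right by lra. rewrite Rmult_comm. apply Rmult_le_compat_r; lra.
    intros b _. rewrite <- lsum_scal. apply lsum_ext. intros c _. unfold x. field. lra.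
Qed.

Lemma fold_max_le (l : list nat) f S : 0 <= S -> (forall i, In i l -> f i <= S) ->
  fold_right Rmax 0 (map f l) <= S.
Proof. induction l; simpl; intros; auto. apply Rmax_lub; auto. Qed.

Lemma fold_max_ge (l : list nat) f i : In i l -> f i <= fold_right Rmax 0 (map f l).
Proof. induction l; simpl. intros []. intros [->|H]. apply Rmax_l. eapply Rle_trans. apply IHl; auto. apply Rmax_r. Qed.

Lemma fold_max_nonneg (l : list nat) f : 0 <= fold_right Rmax 0 (map f l).
Proof. induction l; simpl. lra. eapply Rle_trans. apply IHl. apply Rmax_r. Qed.

Definition Mv G Ts i (v : tensor) b :=
  lsum (all_idx (shape G i)) (fun c => env_matrix G Ts i b c * v c).

Definition Rterm G Ts (delta : nat -> tensor) b :=
  lsum (AE G) (fun a => if list_eq_dec Nat.eq_dec (restrict (open_legs G) a) b then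
     piece G (fun i y => Ts i y + delta i y) a - piece G Ts a -
     lsum (seq 0 (nsites G)) (fun i => lprod (seq 0 (nsites G)) (fun j =>
        if Nat.eqb j i then delta j (restrict (incident G j) a) else Ts j (restrict (incident G j) a)))
   else 0).

Lemma decomp G Ts delta b :
  contract G (fun i y => Ts i y + delta i y) b - contract G Ts b =
  lsum (seq 0 (nsites G)) (fun i => Mv G Ts i (delta i) b) + Rterm G Ts delta b.
Proof.
  rewrite (lsum_ext _ _ (fun i => lsum (AE G) (fun a =>
     if list_eq_dec Nat.eq_dec (restrict (open_legs G) a) b then
       lprod (seq 0 (nsites G)) (fun j =>
        if Nat.eqb j i then delta j (restrict (incident G j) a) else Ts j (restrict (incident G j) a))
     else 0))).
  2:{ intros i Hi. apply in_seq in Hi. unfold Mv. rewrite <- linearity by lia. rewrite contract_eq.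
      apply lsum_ext. intros a _. destruct (list_eq_dec _ _ _); auto. unfold piece.
      apply lprod_ext. intros j _. unfold subst_site. destruct (Nat.eqb_spec j i); subst; auto. }
  rewrite lsum_swap. unfold Rterm. rewrite !contract_eq, <- lsum_minus, <- lsum_plus.
  apply lsum_ext. intros a _. destruct (list_eq_dec _ _ _).
  ring. rewrite lsum_zero. ring.
Qed.

Lemma site_le G (F : nat -> tensor) j : (j < nsites G)%nat -> frob (shape G j) (F j) <= sum_site_norms G F.
Proof.
  intros Hj. unfold sum_site_norms. apply (lsum_term _ (fun i => frob (shape G i) (F i))).
  intros; apply sqrt_pos. apply in_seq; lia.
Qed.

Lemma entry_le G (F : nat -> tensor) j a : (j < nsites G)%nat -> In a (AE G) ->
  Rabs (F j (restrict (incident G j) a)) <= sum_site_norms G F.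
Proof.
  intros Hj Ha. eapply Rle_trans. 2: apply site_le; auto.
  apply (entry_le_nrm (all_idx (shape G j)) (F j)). apply restrict_in; exact Ha. exact Hj.
Qed.

Lemma ssn_nonneg G F : 0 <= sum_site_norms G F.
Proof. apply lsum_nonneg. intros; apply sqrt_pos. Qed.

Definition Cst G Ts := INR (length (all_idx (out_shape G))) * INR (length (AE G)) *
   (INR (nsites G) ^ 2 * (sum_site_norms G Ts + 1) ^ nsites G).

Lemma Cst_nonneg G Ts : 0 <= Cst G Ts.
Proof. unfold Cst. pose proof (ssn_nonneg G Ts). pose proof (pos_INR (nsites G)).
  repeat apply Rmult_le_pos; try apply pos_INR; try apply pow_le; lra. Qed.

Lemma abs_err_upper G Ts delta e : 0 <= e <= 1 -> sum_site_norms G delta <= e ->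
  abs_err G Ts delta <= max_env_norm G Ts * e + Cst G Ts * e ^ 2.
Proof.
  intros He Hd. unfold abs_err, frob. fold (nrm (all_idx (out_shape G))
     (fun b => contract G (fun i x => Ts i x + delta i x) b - contract G Ts b)).
  rewrite (nrm_ext _ _ (fun b => lsum (seq 0 (nsites G)) (fun i => Mv G Ts i (delta i) b) + Rterm G Ts delta b))
    by (intros; apply decomp).
  eapply Rle_trans. apply minkowski. apply Rplus_le_compat.
  - eapply Rle_trans. apply nrm_lsum.
    apply Rle_trans with (lsum (seq 0 (nsites G)) (fun i => max_env_norm G Ts * frob (shape G i) (delta i))).
    + apply lsum_le. intros i Hi. eapply Rle_trans. apply spec_mul.
      apply Rmult_le_compat_r. apply sqrt_pos.
      unfold max_env_norm. apply (fold_max_ge _ (env_norm G Ts)); auto.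
    + rewrite lsum_scal. apply Rmult_le_compat_l. apply fold_max_nonneg. exact Hd.
  - eapply Rle_trans. apply nrm_le_l1. unfold Cst.
    set (N := INR (nsites G) ^ 2 * (sum_site_norms G Ts + 1) ^ nsites G).
    replace (INR (length (all_idx (out_shape G))) * INR (length (AE G)) * N * e ^ 2)
      with (INR (length (all_idx (out_shape G))) * (INR (length (AE G)) * (e^2 * N))) by ring.
    rewrite <- (Rabs_right (lsum (all_idx (out_shape G)) (fun x => Rabs (Rterm G Ts delta x)))).
    2:{ apply Rle_ge, lsum_nonneg; intros; apply Rabs_pos. }
    apply lsum_bound. intros b _. rewrite Rabs_Rabsolu. unfold Rterm. apply lsum_bound.
    intros a Ha. destruct (list_eq_dec _ _ _).
    2:{ rewrite Rabs_R0. unfold N. pose proof (ssn_nonneg G Ts). pose proof (pos_INR (nsites G)).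
        repeat apply Rmult_le_pos; try apply pow_le; lra. }
    unfold piece, N.
    destruct (rem_bounds (seq 0 (nsites G)) (fun j => Ts j (restrict (incident G j) a))
             (fun j => delta j (restrict (incident G j) a)) (sum_site_norms G Ts) e) as [_ HR].
    apply seq_NoDup.
    intros j Hj; apply in_seq in Hj; apply entry_le; auto; lia.
    intros j Hj; apply in_seq in Hj. eapply Rle_trans. apply entry_le; auto; lia. auto.
    apply ssn_nonneg. auto.
    rewrite length_seq in HR. eapply Rle_trans. exact HR. right; ring.
Qed.

Lemma subst_self Ts i : subst_site Ts i (Ts i) = Ts.
Proof. extensionality j. unfold subst_site. destruct (Nat.eqb_spec j i); subst; auto. Qed.

Lemma lower_elem G Ts i x e : (i < nsites G)%nat -> 0 < e ->
  nrm (all_idx (shape G i)) x <= 1 ->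
  exists delta, sum_site_norms G delta <= e /\
    nrm (all_idx (out_shape G)) (Mv G Ts i x) = abs_err G Ts delta / e.
Proof.
  intros Hi He Hx. exists (fun j y => if Nat.eqb j i then e * x y else 0). split.
  - unfold sum_site_norms. rewrite (lsum_single _ _ i).
    + rewrite Nat.eqb_refl. unfold frob. fold (nrm (all_idx (shape G i)) (fun y => e * x y)).
      rewrite nrm_scale, Rabs_right by lra. nra.
    + apply seq_NoDup.
    + apply in_seq; lia.
    + intros j _ Hj. rewrite (proj2 (Nat.eqb_neq j i) Hj). unfold frob.
      rewrite (lsum_ext _ _ (fun _ => 0)), lsum_zero, sqrt_0; auto. intros; simpl; ring.
  - assert (Heq : (fun i0 x0 => Ts i0 x0 + (if Nat.eqb i0 i then e * x x0 else 0))
                  = subst_site Ts i (fun y => Ts i y + e * x y)).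
    { extensionality j. extensionality y. unfold subst_site. destruct (Nat.eqb_spec j i); subst; ring. }
    unfold abs_err. rewrite Heq. unfold frob.
    fold (nrm (all_idx (out_shape G)) (fun b => contract G (subst_site Ts i (fun y => Ts i y + e * x y)) b - contract G Ts b)).
    rewrite (nrm_ext _ (fun b => contract G (subst_site Ts i (fun y => Ts i y + e * x y)) b - contract G Ts b) (fun b => e * Mv G Ts i x b)).
    rewrite nrm_scale, Rabs_right by lra. field. lra.
    intros b _. rewrite linearity by auto.
    assert (HT : contract G Ts b = lsum (all_idx (shape G i)) (fun c => env_matrix G Ts i b c * Ts i c))
      by (rewrite <- linearity by auto; rewrite subst_self; auto).
    rewrite HT.
    unfold Mv. rewrite <- lsum_scal, <- lsum_minus. apply lsum_ext. intros; ring.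
Qed.

Definition SR G Ts eps r := exists delta : nat -> tensor,
  sum_site_norms G delta <= eps /\ r = abs_err G Ts delta / eps.

Lemma SR_bounds G Ts eps : 0 < eps <= 1 ->
  max_env_norm G Ts <= sup_ratio G Ts eps <= max_env_norm G Ts + Cst G Ts * eps.
Proof.
  intros He.
  assert (Hub : forall r, SR G Ts eps r -> r <= max_env_norm G Ts + Cst G Ts * eps).
  { intros r [d [Hd ->]]. pose proof (abs_err_upper G Ts d eps ltac:(lra) Hd).
    apply Rmult_le_reg_r with eps. lra. unfold Rdiv. rewrite Rmult_assoc, Rinv_l by lra. nra. }
  assert (Hne : SR G Ts eps (abs_err G Ts (fun _ _ => 0) / eps)).
  { exists (fun _ _ => 0). split; auto. unfold sum_site_norms.
    rewrite (lsum_ext _ _ (fun _ => 0)), lsum_zero. lra.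
    intros j _. unfold frob. rewrite (lsum_ext _ _ (fun _ => 0)), lsum_zero, sqrt_0; auto. intros; simpl; ring. }
  assert (Hlub : is_lub (SR G Ts eps) (sup_ratio G Ts eps)).
  { apply Rsup_lub. exists (max_env_norm G Ts + Cst G Ts * eps). intros r Hr; auto. eauto. }
  split.
  - unfold max_env_norm. apply fold_max_le.
    + eapply Rle_trans. 2: apply (proj1 Hlub _ Hne). unfold Rdiv. apply Rmult_le_pos. apply sqrt_pos.
      left; apply Rinv_0_lt_compat; lra.
    + intros i Hi. apply in_seq in Hi. apply (proj2 (spec_lub _ _ _)).
      intros r [x [Hx ->]]. apply (proj1 Hlub).
      destruct (lower_elem G Ts i x eps ltac:(lia) ltac:(lra) Hx) as [d [Hd Heq]].
      exists d. split; auto.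
  - apply (proj2 Hlub). intros r Hr; auto.
Qed.

Theorem mainTheorem2 (G : TN) (Ts : nat -> tensor) :
  well_formed G ->
  frob (out_shape G) (contract G Ts) <> 0 ->
  is_kappa_a G Ts (max_env_norm G Ts) /\
  kappa_a G Ts = max_env_norm G Ts /\
  kappa_r G Ts =
    sum_site_norms G Ts / frob (out_shape G) (contract G Ts) * max_env_norm G Ts.
Proof.
  intros _ _.
  assert (Hk : is_kappa_a G Ts (max_env_norm G Ts)).
  { intros eps Heps. pose proof (Cst_nonneg G Ts).
    exists (Rmin 1 (eps / (Cst G Ts + 1))). split.
    - apply Rmin_glb_lt. lra. apply Rdiv_lt_0_compat; lra.
    - intros x [Hx Hd]. simpl in Hd |- *. unfold Rdist in *. rewrite Rminus_0_r in Hd.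
      rewrite Rabs_right in Hd by lra.
      pose proof (Rmin_l 1 (eps / (Cst G Ts + 1))). pose proof (Rmin_r 1 (eps / (Cst G Ts + 1))).
      destruct (SR_bounds G Ts x ltac:(lra)) as [HB1 HB2].
      rewrite Rabs_right by lra.
      assert (x * (Cst G Ts + 1) < eps).
      { apply Rmult_lt_reg_r with (/ (Cst G Ts + 1)). apply Rinv_0_lt_compat; lra.
        rewrite Rmult_assoc, Rinv_r by lra. unfold Rdiv in *. lra. }
      nra. }
  assert (Hka : kappa_a G Ts = max_env_norm G Ts).
  { unfold kappa_a. apply (single_limit (sup_ratio G Ts) (fun eps => 0 < eps)) with 0.
    - intros alp Halp. exists (alp / 2). split. lra. simpl. unfold Rdist.
      rewrite Rminus_0_r, Rabs_right; lra.
    - apply epsilon_spec. eauto.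
    - exact Hk. }
  split; auto. split; auto. unfold kappa_r. rewrite Hka. reflexivity.
Qed.
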